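(* Let $N\ge2$. Equip the space of real symmetric $N\times N$ matrices with the inner product $\langle A|B\rangle=\operatorname{Tr}(AB)$ and norm $\|A\|=\sqrt{\langle A|A\rangle}$, and write $\hat A=A-\mathbb{1}_N$. (i) Every Ising matrix $\boldsymbol\gamma\in\mathcal{I}$ satisfies $\|\hat{\boldsymbol\gamma}\|=\sqrt{N(N-1)}$. (ii) For $0\le k\le\lfloor N/2\rfloor$ and every $\boldsymbol\gamma\in\mathcal{I}_k$, $\langle\hat{\boldsymbol\gamma}|\hat A_0\rangle=(N-2k)^2-N$. (iii) For every $\boldsymbol\gamma\in\mathcal{I}_k$, $\|\boldsymbol\gamma-A_0\|=2\sqrt{2k(N-k)}$. (iv) The barycenter $B_k=\frac{1}{|\mathcal{I}_k|}\sum_{\boldsymbol\gamma\in\mathcal{I}_k}\boldsymbol\gamma$ satisfies $B_k=\Bigl(1-\frac{4k(N-k)}{N(N-1)}\Bigr)A_0+\frac{4k(N-k)}{N(N-1)}\mathbb{1}_N$.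
   Context: An Ising matrix is a matrix $\mathbf{s}\mathbf{s}^\top$ with $\mathbf{s}\in\{+1,-1\}^N$ (a column vector); $\mathcal{I}$ is the set of all Ising matrices (the rank-one elements of the set of positive semi-definite symmetric $N\times N$ matrices with unit diagonal). For $\mathcal{K}\subseteq\{1,\ldots,N\}$, $A_{\mathcal K}$ denotes the Ising matrix of the vector with $s_\mu=-1$ for $\mu\in\mathcal K$ and $s_\mu=+1$ otherwise; $A_0=A_\emptyset$ is the all-ones matrix. For $0\le k\le\lfloor N/2\rfloor$, $\mathcal{I}_k=\{A_{\mathcal K}:|\mathcal K|=k\}$ (as a set of matrices). $\mathbb{1}_N$ is the identity matrix. *)

(* Defs.v *)
From HB Require Import structures.
From mathcomp Require Import all_boot all_order all_algebra.
Set Implicit Arguments. Unset Strict Implicit. Unset Printing Implicit Defensive.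
Import Order.TTheory GRing.Theory Num.Theory.
Local Open Scope ring_scope.

Section IsingDefs.
Variables (R : rcfType) (N : nat).

Definition ip (A B : 'M[R]_N) : R := \tr (A *m B).
Definition mnorm (A : 'M[R]_N) : R := Num.sqrt (ip A A).

Definition hat (A : 'M[R]_N) : 'M[R]_N := A - 1%:M.

Definition is_ising (A : 'M[R]_N) : Prop :=
  exists s : 'cV[R]_N, (forall i, s i 0 = 1 \/ s i 0 = -1) /\ A = s *m s^T.

Definition sgnvec (K : {set 'I_N}) : 'cV[R]_N :=
  \col_i (if i \in K then -1 else 1).
Definition AK (K : {set 'I_N}) : 'M[R]_N := sgnvec K *m (sgnvec K)^T.
Definition A0 : 'M[R]_N := AK set0.

Definition Ik (k : nat) : seq 'M[R]_N :=
  undup [seq AK K | K <- enum [set K : {set 'I_N} | #|K| == k]].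

Definition bary (k : nat) : 'M[R]_N :=
  (size (Ik k))%:R^-1 *: \sum_(g <- Ik k) g.

End IsingDefs.

(* Main.v *)
Require Import Defs.
From HB Require Import structures.
From mathcomp Require Import all_boot all_order all_algebra all_fingroup.
From mathcomp Require Import ring lra.
Import Order.TTheory GRing.Theory Num.Theory.
Local Open Scope ring_scope.

Section Helpers.
Variables (R : rcfType) (N : nat).

Definition sg (K : {set 'I_N}) (i : 'I_N) : R := if i \in K then -1 else 1.

Lemma sg2 K i : sg K i * sg K i = 1.
Proof. by rewrite /sg; case: (i \in K); rewrite ?mulrNN mulr1. Qed.

Lemma AKE K i j : @AK R N K i j = sg K i * sg K j.
Proof. by rewrite /AK !mxE big_ord1 !mxE. Qed.

Lemma A0E i j : @A0 R N i j = 1.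
Proof. by rewrite /A0 AKE /sg !in_set0 mul1r. Qed.

Lemma ipE (A B : 'M[R]_N) : ip A B = \sum_i \sum_j A i j * B j i.
Proof. by rewrite /ip /mxtrace; apply: eq_bigr => i _; rewrite mxE. Qed.

Lemma sum_sq (a : 'I_N -> R) : \sum_i \sum_j a i * a j = (\sum_i a i) ^+ 2.
Proof. by rewrite expr2 mulr_suml; apply: eq_bigr => i _; rewrite mulr_sumr. Qed.

Lemma sum_delta (i : 'I_N) : \sum_j ((i == j)%:R : R) = 1.
Proof.
rewrite (bigD1 i) //= eqxx big1 ?addr0 // => j /negbTE.
by rewrite eq_sym => ->.
Qed.

Lemma sum_sg K : \sum_i sg K i = N%:R - 2 * #|K|%:R.
Proof.
have -> : \sum_i sg K i = \sum_i (1 - 2 * ((i \in K)%:R : R)).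
  by apply: eq_bigr => i _; rewrite /sg; case: (i \in K) => /=; ring.
rewrite sumrB sumr_const card_ord -mulr_sumr.
have -> : \sum_i ((i \in K)%:R : R) = \sum_(i in K) 1.
  by rewrite [RHS]big_mkcond; apply: eq_bigr => i _; case: (i \in K).
by rewrite sumr_const mulr_natr.
Qed.

Lemma part1 (t : 'I_N -> R) (ht : forall i, t i * t i = 1) (g : 'M[R]_N)
  (hg : forall i j, g i j = t i * t j) :
  ip (hat g) (hat g) = N%:R * (N%:R - 1).
Proof.
rewrite ipE.
have -> : \sum_i \sum_j hat g i j * hat g j i =
          \sum_(i : 'I_N) \sum_(j : 'I_N) (1 - ((i == j)%:R : R)).
  apply: eq_bigr => i _; apply: eq_bigr => j _.
  rewrite /hat !mxE !hg; case: (eqVneq i j) => [->|nij].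
    by rewrite ht /=; ring.
  have hi := ht i; have hj := ht j.
  rewrite /= !subr0; transitivity ((t i * t i) * (t j * t j)); first ring.
  by rewrite hi hj; ring.
under eq_bigr do rewrite sumrB sum_delta sumr_const card_ord.
by rewrite sumr_const card_ord -[in LHS]mulr_natl.
Qed.


Lemma hatE (A : 'M[R]_N) i j : hat A i j = A i j - (i == j)%:R.
Proof. by rewrite /hat !mxE. Qed.

Lemma subE (A B : 'M[R]_N) i j : (A - B) i j = A i j - B i j.
Proof. by rewrite !mxE. Qed.

Lemma sgsg K i j : (sg K i * sg K j) * (sg K j * sg K i) = 1.
Proof.
transitivity ((sg K i * sg K i) * (sg K j * sg K j)); first ring.
by rewrite !sg2 mulr1.
Qed.

Lemma part2 K : ip (hat (@AK R N K)) (hat (@A0 R N)) =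
  (N%:R - 2 * #|K|%:R) ^+ 2 - N%:R.
Proof.
rewrite ipE.
have -> : \sum_i \sum_j hat (@AK R N K) i j * hat (@A0 R N) j i =
          \sum_(i : 'I_N) \sum_(j : 'I_N) (sg K i * sg K j - ((i == j)%:R : R)).
  apply: eq_bigr => i _; apply: eq_bigr => j _.
  rewrite !hatE AKE A0E; case: (eqVneq i j) => [->|nij].
    by rewrite sg2 /=; ring.
  by rewrite /=; ring.
under eq_bigr do rewrite sumrB sum_delta.
by rewrite sumrB sum_sq sum_sg sumr_const card_ord.
Qed.

Lemma part3 K : ip (@AK R N K - @A0 R N) (@AK R N K - @A0 R N) =
  8 * #|K|%:R * (N%:R - #|K|%:R).
Proof.
rewrite ipE.
have -> : \sum_i \sum_j (@AK R N K - @A0 R N) i j * (@AK R N K - @A0 R N) j i =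
          \sum_(i : 'I_N) \sum_(j : 'I_N) (2 - 2 * (sg K i * sg K j)).
  apply: eq_bigr => i _; apply: eq_bigr => j _.
  rewrite !subE !A0E !AKE.
  transitivity ((sg K i * sg K j) * (sg K j * sg K i) + 1 - 2 * (sg K i * sg K j)); first ring.
  by rewrite sgsg.
under eq_bigr do rewrite sumrB sumr_const card_ord -mulr_sumr.
rewrite sumrB sumr_const card_ord -mulr_sumr sum_sq sum_sg.
ring.
Qed.


Lemma sg_setC K i : sg (~: K) i = - sg K i.
Proof. by rewrite /sg in_setC; case: (i \in K) => /=; rewrite ?opprK. Qed.

Lemma AK_setC K : @AK R N (~: K) = @AK R N K.
Proof. by apply/matrixP => i j; rewrite !AKE !sg_setC mulrNN. Qed.

Lemma AK_inj (i0 : 'I_N) K K0 : @AK R N K = @AK R N K0 -> K = K0 \/ K = ~: K0.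
Proof.
move=> E.
have Ei : forall i, sg K i * sg K i0 = sg K0 i * sg K0 i0.
  by move=> i; rewrite -!AKE E.
clear E.
case Hi0: (i0 \in K); case Hi0': (i0 \in K0).
- left; apply/setP => i; have := Ei i; rewrite /sg Hi0 Hi0'.
  by case: (i \in K); case: (i \in K0) => //= h; exfalso; lra.
- right; apply/setP => i; have := Ei i; rewrite in_setC /sg Hi0 Hi0'.
  by case: (i \in K); case: (i \in K0) => //= h; exfalso; lra.
- right; apply/setP => i; have := Ei i; rewrite in_setC /sg Hi0 Hi0'.
  by case: (i \in K); case: (i \in K0) => //= h; exfalso; lra.
- left; apply/setP => i; have := Ei i; rewrite /sg Hi0 Hi0'.
  by case: (i \in K); case: (i \in K0) => //= h; exfalso; lra.
Qed.

Definition KS (k : nat) := [set K : {set 'I_N} | #|K| == k].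

Lemma count_AK (i0 : 'I_N) k (K0 : {set 'I_N}) : #|K0| = k ->
  count_mem (@AK R N K0) [seq @AK R N K | K <- enum (KS k)] = (1 + (N - k == k))%N.
Proof.
move=> hK0; rewrite count_map.
have Ep : preim (@AK R N) (pred1 (@AK R N K0)) =1 predU (pred1 K0) (pred1 (~: K0)).
  move=> K /=; apply/eqP/orP.
    by move/(AK_inj i0) => [->|->]; [left|right].
  by case=> /eqP ->; rewrite ?AK_setC.
have neq : K0 != ~: K0.
  apply/eqP => h; have : i0 \in K0 = (i0 \in ~: K0) by rewrite -h.
  by rewrite in_setC; case: (i0 \in K0).
rewrite (eq_count Ep).
have E0 : count (predI (pred1 K0) (pred1 (~: K0))) (enum (KS k)) = 0%N.
  rewrite (@eq_count _ _ pred0) ?count_pred0 // => K /=.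
  by apply/andP => -[/eqP -> /eqP h]; move/eqP: neq.
have := count_predUI (pred1 K0) (pred1 (~: K0)) (enum (KS k)).
rewrite E0 addn0 => ->.
have U := enum_uniq (KS k).
have c1 := count_uniq_mem K0 U. have c2 := count_uniq_mem (~: K0) U.
rewrite c1 c2 !mem_enum !inE hK0 eqxx.
have hc : #|~: K0| = (N - k)%N.
  by have := cardsC K0; rewrite card_ord hK0 => h; rewrite -[in RHS]h addKn.
by rewrite hc.
Qed.


Lemma sum1 (T : Type) (r : seq T) : \sum_(x <- r) (1 : R) = (size r)%:R.
Proof. by elim: r => [|x r IH]; rewrite ?big_nil // big_cons IH /= -natr1 addrC. Qed.

Lemma bary_eq (i0 : 'I_N) k :
  @bary R N k = ('C(N, k))%:R^-1 *: \sum_(K in KS k) @AK R N K.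
Proof.
set s := [seq @AK R N K | K <- enum (KS k)].
set m := (1 + (N - k == k))%N.
have hm : forall g, g \in undup s -> count_mem g s = m.
  move=> g; rewrite mem_undup => /mapP [K0]; rewrite mem_enum inE => /eqP hK ->.
  exact: count_AK.
have E1 : \sum_(g <- s) g = (\sum_(g <- undup s) g) *+ m.
  rewrite -big_undup_iterop_count -sumrMnl big_seq [RHS]big_seq.
  by apply: eq_bigr => g hg; rewrite hm // Monoid.iteropE iter_addr_0.
have E2 : (size s)%:R = (size (undup s))%:R *+ m :> R.
  rewrite -!sum1 -big_undup_iterop_count -sumrMnl big_seq [RHS]big_seq.
  by apply: eq_bigr => g hg; rewrite hm // Monoid.iteropE iter_addr_0.
have E3 : size s = 'C(N, k).
  by rewrite size_map -cardE card_draws card_ord.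
have E4 : \sum_(g <- s) g = \sum_(K in KS k) @AK R N K.
  by rewrite big_map big_enum.
rewrite /bary /Ik -/s -E4 -E3 E1 E2.
have m0 : (m%:R : R) != 0 by rewrite pnatr_eq0.
by rewrite -scaler_nat scalerA -[(size _)%:R *+ _]mulr_natr invfM -mulrA mulVf // mulr1.
Qed.


Definition M k i j : R := \sum_(K in KS k) sg K i * sg K j.

Lemma M_diag k i : M k i i = ('C(N, k))%:R.
Proof.
rewrite /M (eq_bigr (fun _ => 1)) => [|K _]; last exact: sg2.
by rewrite sumr_const /KS card_draws card_ord.
Qed.

Lemma M_perm k (p : {perm 'I_N}) i j : M k (p i) (p j) = M k i j.
Proof.
rewrite /M [LHS](reindex_inj (imset_inj (@perm_inj _ p))).
apply: eq_big => [K|K _]; first by rewrite !inE card_imset //; exact: perm_inj.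
by rewrite /sg !mem_imset //; exact: perm_inj.
Qed.

Lemma M_off k i j i' j' : i != j -> i' != j' -> M k i j = M k i' j'.
Proof.
move=> hij hij'.
pose q := tperm i i'. pose r := tperm (q j) j'.
have qi : q i = i' by rewrite /q tpermL.
have qj : q j != i'.
  by rewrite -qi (inj_eq perm_inj) eq_sym.
rewrite -(M_perm k (q * r)%g) !permM qi /r tpermL tpermD //.
by rewrite eq_sym.
Qed.

Lemma M_total k : \sum_i \sum_j M k i j = ('C(N, k))%:R * (N%:R - 2 * k%:R) ^+ 2.
Proof.
rewrite /M.
under eq_bigr do rewrite exchange_big.
rewrite exchange_big /=.
rewrite (eq_bigr (fun _ => (N%:R - 2 * k%:R) ^+ 2)) => [|K].
  by rewrite sumr_const /KS card_draws card_ord [RHS]mulr_natl.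
by rewrite /KS inE => /eqP hK; rewrite sum_sq sum_sg hK.
Qed.


Lemma A0const : @A0 R N = const_mx 1.
Proof. by apply/matrixP => i j; rewrite A0E mxE. Qed.

Lemma part4 k (hk : (k <= N)%N) (HN : (2 <= N)%N) :
  @bary R N k =
       (1 - 4 * k%:R * (N%:R - k%:R) / (N%:R * (N%:R - 1))) *: @A0 R N
       + (4 * k%:R * (N%:R - k%:R) / (N%:R * (N%:R - 1))) *: 1%:M.
Proof.
have h0 : (0 < N)%N by apply: leq_trans HN.
pose i0 : 'I_N := Ordinal h0. pose j0 : 'I_N := Ordinal HN.
have i0j0 : i0 != j0 by [].
have C0 : ('C(N, k)%:R : R) != 0 by rewrite pnatr_eq0 -lt0n bin_gt0.
have N2 : (2 : R) <= N%:R by rewrite (ler_nat R 2 N).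
rewrite (bary_eq i0); apply/matrixP => i j.
rewrite A0const !mxE summxE.
under eq_bigr do rewrite AKE.
rewrite -/(M k i j).
case: (eqVneq i j) => [<-|nij].
  by rewrite M_diag mulVf //= !mulr1 subrK.
rewrite (@M_off k _ _ _ _ nij i0j0).
set v := M k i0 j0.
have row : forall i', \sum_j M k i' j = v *+ N + ('C(N, k)%:R - v).
  move=> i'; rewrite (eq_bigr (fun j => v + ('C(N, k)%:R - v) * ((i' == j)%:R : R))) => [|j' _].
    by rewrite big_split /= sumr_const card_ord -mulr_sumr sum_delta mulr1.
  case: (eqVneq i' j') => [<-|ne]; first by rewrite M_diag /= mulr1 addrC subrK.
  by rewrite (@M_off k _ _ _ _ ne i0j0) /= mulr0 addr0.
have hv := M_total k.
rewrite (eq_bigr _ (fun i' _ => row i')) sumr_const card_ord in hv.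
have X0 : (N%:R * (N%:R - 1) : R) != 0.
  by rewrite mulf_neq0 // lt0r_neq0 //; lra.
have h2 : v * (N%:R * (N%:R - 1)) = 'C(N, k)%:R * ((N%:R - 2 * k%:R) ^+ 2 - N%:R).
  transitivity ((v *+ N + ('C(N, k)%:R - v)) *+ N - 'C(N, k)%:R * N%:R); first ring.
  by rewrite hv; ring.
have -> : v = 'C(N, k)%:R * ((N%:R - 2 * k%:R) ^+ 2 - N%:R) / (N%:R * (N%:R - 1)).
  by rewrite -h2 mulfK.
rewrite /=; field.
by rewrite C0 andbT; apply/andP; split; rewrite lt0r_neq0 //; lra.
Qed.

End Helpers.

Lemma memIk (R : rcfType) (N k : nat) (g : 'M[R]_N) :
  g \in @Ik R N k -> exists K : {set 'I_N}, #|K| = k /\ g = @AK R N K.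
Proof.
rewrite /Ik mem_undup => /mapP [K]; rewrite mem_enum inE => /eqP hK ->.
by exists K.
Qed.

Theorem proposition1 (R : rcfType) (N : nat) (HN : (2 <= N)%N) :
  (forall g : 'M[R]_N, is_ising g ->
     mnorm (hat g) = Num.sqrt (N%:R * (N%:R - 1))) /\
  (forall k : nat, (k <= N./2)%N -> forall g : 'M[R]_N, g \in @Ik R N k ->
     ip (hat g) (hat (@A0 R N)) = (N%:R - 2 * k%:R) ^+ 2 - N%:R) /\
  (forall k : nat, (k <= N./2)%N -> forall g : 'M[R]_N, g \in @Ik R N k ->
     mnorm (g - @A0 R N) = 2 * Num.sqrt (2 * k%:R * (N%:R - k%:R))) /\
  (forall k : nat, (k <= N./2)%N ->
     @bary R N k =
       (1 - 4 * k%:R * (N%:R - k%:R) / (N%:R * (N%:R - 1))) *: @A0 R N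
       + (4 * k%:R * (N%:R - k%:R) / (N%:R * (N%:R - 1))) *: 1%:M).
Proof.
split; [|split; [|split]].
- move=> g [s [hs ->]]; rewrite /mnorm (@part1 R N (fun i => s i 0)) //.
    by move=> i; case: (hs i) => ->; rewrite ?mulrNN mulr1.
  by move=> i j; rewrite !mxE big_ord1 !mxE.
- move=> k _ g /memIk [K [hK ->]]; by rewrite part2 hK.
- move=> k _ g /memIk [K [hK ->]]; rewrite /mnorm part3 hK.
  have -> : 8 * k%:R * (N%:R - k%:R) = 2 ^+ 2 * (2 * k%:R * (N%:R - k%:R)) :> R by ring.
  by rewrite sqrtrM ?sqr_ge0 // sqrtr_sqr ger0_norm.
- move=> k hk; apply: part4 => //.
  apply: leq_trans hk _; rewrite leq_half_double; apply: leqW; rewrite -addnn; exact: leq_addr.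
Qed.
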